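(* Let $q=2^m>4$ and let $l$ be an integer with $0\leq l\leq 3$. Then there exists a linear $l$-intersection pair of two MDS codes over $\mathbb{F}_q$ both with parameters $[q+2,3,q]_q$.
   Context: An $[n,k,d]_q$ linear code is a $k$-dimensional subspace of $\mathbb{F}_q^n$ with minimum Hamming distance $d$; it is MDS if $d=n-k+1$. Two linear codes $C_1,C_2\subseteq\mathbb{F}_q^n$ form a linear $l$-intersection pair if $\dim(C_1\cap C_2)=l$. *)

(* Defs.v *)
From HB Require Import structures.
From mathcomp Require Import all_boot all_order all_algebra all_field.
Set Implicit Arguments. Unset Strict Implicit. Unset Printing Implicit Defensive.
Import GRing.Theory.
Local Open Scope ring_scope.

Definition hwt (F : fieldType) (n : nat) (x : 'rV[F]_n) : nat :=
  #|[set i : 'I_n | x 0 i != 0]|.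

Definition hdist (F : fieldType) (n : nat) (x y : 'rV[F]_n) : nat := hwt (x - y).

Definition min_dist_is (F : fieldType) (n : nat) (C : {vspace 'rV[F]_n}) (d : nat) : Prop :=
  (exists x y, [/\ x \in C, y \in C, x != y & hdist x y = d]) /\
  (forall x y, x \in C -> y \in C -> x != y -> (d <= hdist x y)%N).

Definition is_code (F : fieldType) (n k d : nat) (C : {vspace 'rV[F]_n}) : Prop :=
  \dim C = k /\ min_dist_is C d.

Definition is_MDS (F : fieldType) (n : nat) (C : {vspace 'rV[F]_n}) : Prop :=
  min_dist_is C (n - \dim C + 1).

Definition l_intersection_pair (F : fieldType) (n l : nat) (C1 C2 : {vspace 'rV[F]_n}) : Prop :=
  \dim (C1 :&: C2)%VS = l.

(* Main.v *)
Require Import Defs.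
From HB Require Import structures.
From mathcomp Require Import all_boot all_order all_algebra all_field.
From mathcomp Require Import ring zify.
Set Implicit Arguments. Unset Strict Implicit. Unset Printing Implicit Defensive.
Import GRing.Theory.
Local Open Scope ring_scope.

Lemma char2 (F : finFieldType) m : #|F| = (2 ^ m)%N -> (2%:R : F) = 0.
Proof. move=> hq; apply: pcharf0; exact: (card_finPcharP hq). Qed.

Lemma vander3 (F : fieldType) (d0 d1 d2 t1 t2 t3 : F) :
  t1 != t2 -> t1 != t3 -> t2 != t3 ->
  d0 + d1 * t1 + d2 * t1 ^+ 2 = 0 -> d0 + d1 * t2 + d2 * t2 ^+ 2 = 0 ->
  d0 + d1 * t3 + d2 * t3 ^+ 2 = 0 -> [/\ d0 = 0, d1 = 0 & d2 = 0].
Proof.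
move=> h12 h13 h23 e1 e2 e3.
have k12 : (t1 - t2) * (d1 + d2 * (t1 + t2)) = 0.
  by rewrite -[RHS](subrr 0) -{1}e1 -e2; ring.
have k13 : (t1 - t3) * (d1 + d2 * (t1 + t3)) = 0.
  by rewrite -[RHS](subrr 0) -{1}e1 -e3; ring.
move/eqP: k12; rewrite mulf_eq0 subr_eq0 (negbTE h12) /= => /eqP k12.
move/eqP: k13; rewrite mulf_eq0 subr_eq0 (negbTE h13) /= => /eqP k13.
have : d2 * (t2 - t3) = 0 by rewrite -[RHS](subrr 0) -{1}k12 -k13; ring.
move/eqP; rewrite mulf_eq0 subr_eq0 (negbTE h23) orbF => /eqP D2.
move: k12; rewrite D2 mul0r addr0 => D1.
by move: e1; rewrite D1 D2 !mul0r !addr0 => D0.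
Qed.

Definition pt (F : finFieldType) m (hq : #|F| = (2 ^ m)%N) (j : 'I_(2 ^ m)) : F :=
  enum_val (cast_ord (esym hq) j).

Definition base (F : finFieldType) m (hq : #|F| = (2 ^ m)%N) (a b c : F)
  (i : 'I_(2 ^ m + 2)) : F :=
  match split i with
  | inl j => a + b * pt hq j + c * pt hq j ^+ 2
  | inr k => if k == ord0 then b else c
  end.

Definition word (F : finFieldType) m (hq : #|F| = (2 ^ m)%N) (v : 'I_(2 ^ m + 2) -> F)
  (a b c : F) : 'rV[F]_(2 ^ m + 2) := \row_i (v i * base hq a b c i).

Definition gens (F : finFieldType) m (hq : #|F| = (2 ^ m)%N) v :=
  [:: word hq v 1 0 0; word hq v 0 1 0; word hq v 0 0 1].

Definition code (F : finFieldType) m (hq : #|F| = (2 ^ m)%N) v := <<gens hq v>>%VS.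

Definition pos (F : finFieldType) m (hq : #|F| = (2 ^ m)%N) (t : F) : 'I_(2 ^ m + 2) :=
  lshift 2 (cast_ord hq (enum_rank t)).
Definition posP m : 'I_(2 ^ m + 2) := rshift (2 ^ m) (ord0 : 'I_2).
Definition posQ m : 'I_(2 ^ m + 2) := rshift (2 ^ m) (ord_max : 'I_2).

Lemma pt_inj (F : finFieldType) m (hq : #|F| = (2 ^ m)%N) : injective (pt hq).
Proof. by move=> i j /enum_val_inj /cast_ord_inj. Qed.

Lemma pt_pos (F : finFieldType) m (hq : #|F| = (2 ^ m)%N) t :
  pt hq (cast_ord hq (enum_rank t)) = t.
Proof. by rewrite /pt cast_ordK enum_rankK. Qed.

Lemma base_l (F : finFieldType) m (hq : #|F| = (2 ^ m)%N) a b c j :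
  base hq a b c (lshift 2 j) = a + b * pt hq j + c * pt hq j ^+ 2.
Proof. by rewrite /base (unsplitK (inl _ j)). Qed.

Lemma base_pos (F : finFieldType) m (hq : #|F| = (2 ^ m)%N) a b c t :
  base hq a b c (pos hq t) = a + b * t + c * t ^+ 2.
Proof. by rewrite /pos base_l pt_pos. Qed.

Lemma base_P (F : finFieldType) m (hq : #|F| = (2 ^ m)%N) a b c :
  base hq a b c (posP m) = b.
Proof. by rewrite /base /posP (unsplitK (inr _ (ord0 : 'I_2))). Qed.

Lemma base_Q (F : finFieldType) m (hq : #|F| = (2 ^ m)%N) a b c :
  base hq a b c (posQ m) = c.
Proof. by rewrite /base /posQ (unsplitK (inr _ (ord_max : 'I_2))). Qed.

Lemma decode m (i : 'I_(2 ^ m + 2)) :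
  (exists j, i = lshift 2 j) \/ i = posP m \/ i = posQ m.
Proof.
case: (split_ordP i) => [j ->|k ->]; first by left; exists j.
right; case: k => [[|[|k]] Hk].
- by left; congr rshift; apply: val_inj.
- by right; congr rshift; apply: val_inj.
- by [].
Qed.

Lemma word_lin (F : finFieldType) m (hq : #|F| = (2 ^ m)%N) v a b c :
  word hq v a b c = a *: word hq v 1 0 0 + b *: word hq v 0 1 0 + c *: word hq v 0 0 1.
Proof.
apply/rowP => i; rewrite !mxE /base.
by case: split => [j|k]; [|case: eqP => _]; ring.
Qed.

Lemma word_sub (F : finFieldType) m (hq : #|F| = (2 ^ m)%N) v a b c a' b' c' :
  word hq v a b c - word hq v a' b' c' = word hq v (a - a') (b - b') (c - c').
Proof.
apply/rowP => i; rewrite !mxE /base.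
by case: split => [j|k]; [|case: eqP => _]; ring.
Qed.

Lemma mem_codeP (F : finFieldType) m (hq : #|F| = (2 ^ m)%N) v x :
  reflect (exists a b c, x = word hq v a b c) (x \in code hq v).
Proof.
rewrite /code /gens !span_cons span_nil addv0.
apply: (iffP memv_addP).
  move=> [y /vlineP [a ->] [z /memv_addP [y' /vlineP [b ->] [z' /vlineP [c ->] ->]] ->]].
  by exists a, b, c; rewrite [RHS]word_lin addrA.
move=> [a [b [c ->]]]; rewrite (word_lin hq v a b c) -addrA.
exists (a *: word hq v 1 0 0); first by apply/vlineP; exists a.
exists (b *: word hq v 0 1 0 + c *: word hq v 0 0 1) => //.
apply/memv_addP; exists (b *: word hq v 0 1 0); first by apply/vlineP; exists b.
by exists (c *: word hq v 0 0 1) => //; apply/vlineP; exists c.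
Qed.

Lemma three_elems (T : finType) (A : {set T}) : (2 < #|A|)%N ->
  exists i j k, [/\ i \in A, j \in A, k \in A & [/\ i != j, i != k & j != k]].
Proof.
move=> hA.
have /set0Pn [i hi] : A != set0 by rewrite -card_gt0; lia.
have hA1 := cardsD1 i A; rewrite hi in hA1.
have /set0Pn [j hj] : A :\ i != set0 by rewrite -card_gt0; lia.
have hA2 := cardsD1 j (A :\ i); rewrite hj in hA2.
have /set0Pn [k hk] : A :\ i :\ j != set0 by rewrite -card_gt0; lia.
move: hj hk; rewrite !inE => /andP [hji hj] /and3P [hkj hki hk].
by exists i, j, k; split => //; split => //; rewrite eq_sym.
Qed.

Lemma S_LLP (F : fieldType) (a b c t1 t2 : F) : 2%:R = 0 :> F -> t1 != t2 ->
  a + b * t1 + c * t1 ^+ 2 = 0 -> a + b * t2 + c * t2 ^+ 2 = 0 -> b = 0 ->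
  [/\ a = 0, b = 0 & c = 0].
Proof.
move=> h2 h12 e1 e2 hb; subst b.
have : c * (t1 - t2) ^+ 2 = 0.
  have -> : c * (t1 - t2) ^+ 2 = (a + 0 * t1 + c * t1 ^+ 2) - (a + 0 * t2 + c * t2 ^+ 2)
     - 2%:R * c * t2 * (t1 - t2) by ring.
  by rewrite e1 e2 h2; ring.
move/eqP; rewrite mulf_eq0 expf_eq0 /= subr_eq0 (negbTE h12) orbF => /eqP hc.
by subst c; move: e1; rewrite !mul0r !addr0.
Qed.

Lemma S_LLQ (F : fieldType) (a b c t1 t2 : F) : t1 != t2 ->
  a + b * t1 + c * t1 ^+ 2 = 0 -> a + b * t2 + c * t2 ^+ 2 = 0 -> c = 0 ->
  [/\ a = 0, b = 0 & c = 0].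
Proof.
move=> h12 e1 e2 hc; subst c.
have : b * (t1 - t2) = 0.
  have -> : b * (t1 - t2) = (a + b * t1 + 0 * t1 ^+ 2) - (a + b * t2 + 0 * t2 ^+ 2) by ring.
  by rewrite e1 e2 subrr.
move/eqP; rewrite mulf_eq0 subr_eq0 (negbTE h12) orbF => /eqP hb.
by subst b; move: e1; rewrite !mul0r !addr0.
Qed.

Lemma S_LPQ (F : fieldType) (a b c t1 : F) :
  a + b * t1 + c * t1 ^+ 2 = 0 -> b = 0 -> c = 0 -> [/\ a = 0, b = 0 & c = 0].
Proof. by move=> e1 hb hc; subst b c; move: e1; rewrite !mul0r !addr0. Qed.

Lemma S_LLL (F : fieldType) (a b c t1 t2 t3 : F) :
  t1 != t2 -> t1 != t3 -> t2 != t3 ->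
  a + b * t1 + c * t1 ^+ 2 = 0 -> a + b * t2 + c * t2 ^+ 2 = 0 ->
  a + b * t3 + c * t3 ^+ 2 = 0 -> [/\ a = 0, b = 0 & c = 0].
Proof. exact: vander3. Qed.

Lemma neq_pt (F : finFieldType) m (hq : #|F| = (2 ^ m)%N) i j :
  i != j -> pt hq i != pt hq j.
Proof. by rewrite (inj_eq (@pt_inj _ _ hq)). Qed.

Arguments neq_pt {F m hq i j}.

Lemma zero3 (F : finFieldType) m (hq : #|F| = (2 ^ m)%N) (a b c : F) i j k :
  i != j -> i != k -> j != k ->
  base hq a b c i = 0 -> base hq a b c j = 0 -> base hq a b c k = 0 ->
  [/\ a = 0, b = 0 & c = 0].
Proof.
have h2 := char2 hq.
move=> hij hik hjk hi hj hk.
case: (decode i) => [[i' Ei]|[Ei|Ei]]; case: (decode j) => [[j' Ej]|[Ej|Ej]];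
  case: (decode k) => [[k' Ek]|[Ek|Ek]]; subst;
  move: hi hj hk hij hik hjk;
  rewrite ?base_l ?base_P ?base_Q /posP /posQ ?eq_shift ?eqxx //;
  move=> hi hj hk hij hik hjk;
  first [ exact: (S_LLL (neq_pt hij) (neq_pt hik) (neq_pt hjk) hi hj hk)
  | exact: (S_LLP h2 (neq_pt hij) hi hj hk) | exact: (S_LLP h2 (neq_pt hik) hi hk hj)
  | exact: (S_LLP h2 (neq_pt hjk) hj hk hi)
  | exact: (S_LLQ (neq_pt hij) hi hj hk) | exact: (S_LLQ (neq_pt hik) hi hk hj)
  | exact: (S_LLQ (neq_pt hjk) hj hk hi)
  | exact: (S_LPQ hi hj hk) | exact: (S_LPQ hi hk hj) | exact: (S_LPQ hj hi hk)
  | exact: (S_LPQ hj hk hi) | exact: (S_LPQ hk hi hj) | exact: (S_LPQ hk hj hi) ].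
Qed.

Lemma free_diag (F : fieldType) n (X : seq 'rV[F]_n) (p : nat -> 'I_n) :
  (forall i j, (i < size X)%N -> (j < size X)%N -> (X`_i 0 (p j) == 0) = (i != j)) ->
  free X.
Proof.
move=> H; suff : free (in_tuple X) by []. apply/freeP => k Hk j.
have := congr1 (fun y : 'rV_n => y 0 (p j)) Hk.
rewrite summxE mxE (bigD1 j) //= big1 ?addr0.
- rewrite mxE => /eqP; rewrite mulf_eq0 H // eqxx orbF => /eqP //.
- move=> i hij; rewrite mxE; apply/eqP; rewrite mulf_eq0 H //.
  by apply/orP; right.
Qed.

Definition posZ (F : finFieldType) m (hq : #|F| = (2 ^ m)%N) := pos hq 0.

Lemma word_pos (F : finFieldType) m (hq : #|F| = (2 ^ m)%N) v a b c t :
  word hq v a b c 0 (pos hq t) = v (pos hq t) * (a + b * t + c * t ^+ 2).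
Proof. by rewrite mxE base_pos. Qed.
Lemma word_Z (F : finFieldType) m (hq : #|F| = (2 ^ m)%N) v a b c :
  word hq v a b c 0 (posZ hq) = v (posZ hq) * a.
Proof. by rewrite /posZ word_pos expr0n /= !mulr0 !addr0. Qed.
Lemma word_P (F : finFieldType) m (hq : #|F| = (2 ^ m)%N) v a b c :
  word hq v a b c 0 (posP m) = v (posP m) * b.
Proof. by rewrite mxE base_P. Qed.
Lemma word_Q (F : finFieldType) m (hq : #|F| = (2 ^ m)%N) v a b c :
  word hq v a b c 0 (posQ m) = v (posQ m) * c.
Proof. by rewrite mxE base_Q. Qed.

Lemma free_gens (F : finFieldType) m (hq : #|F| = (2 ^ m)%N) v :
  (forall i, v i != 0) -> free (gens hq v).
Proof.
move=> Hv; apply: (@free_diag _ _ _ (fun j => nth (posZ hq) [:: posZ hq; posP m; posQ m] j)).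
move=> i j; rewrite /gens /=.
case: i => [|[|[|i]]] //; case: j => [|[|[|j]]] // _ _ /=;
  rewrite ?word_Z ?word_P ?word_Q mulf_eq0 (negbTE (Hv _)) //= ?eqxx ?oner_eq0 //.
Qed.

Lemma dim_code (F : finFieldType) m (hq : #|F| = (2 ^ m)%N) v :
  (forall i, v i != 0) -> \dim (code hq v) = 3%N.
Proof. by move=> Hv; have /eqP := free_gens hq Hv. Qed.

Lemma weight (F : finFieldType) m (hq : #|F| = (2 ^ m)%N) v (Hv : forall i, v i != 0) a b c :
  ~ [/\ a = 0, b = 0 & c = 0] -> (2 ^ m <= hwt (word hq v a b c))%N.
Proof.
move=> nz; rewrite /hwt.
set S := [set i | _].
have hC := cardsC S; rewrite card_ord in hC.
suff : (#|~: S| <= 2)%N by lia.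
rewrite leqNgt; apply/negP => /three_elems [i [j [k [hi hj hk [hij hik hjk]]]]].
apply: nz.
have z : forall i, i \in ~: S -> base hq a b c i = 0.
  by move=> i0; rewrite !inE mxE negbK mulf_eq0 (negbTE (Hv i0)) /= => /eqP.
exact: (zero3 hij hik hjk (z _ hi) (z _ hj) (z _ hk)).
Qed.

Lemma base_r (F : finFieldType) m (hq : #|F| = (2 ^ m)%N) a b c k :
  base hq a b c (rshift (2 ^ m) k) = if k == ord0 then b else c.
Proof. by rewrite /base (unsplitK (inr _ k)). Qed.

Lemma hwt_g1 (F : finFieldType) m (hq : #|F| = (2 ^ m)%N) v (Hv : forall i, v i != 0) :
  hwt (word hq v 1 0 0) = (2 ^ m)%N.
Proof.
rewrite /hwt.
have -> : [set i | word hq v 1 0 0 0 i != 0] = lshift 2 @: [set: 'I_(2 ^ m)].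
  apply/setP => i; rewrite !inE mxE; case: (split_ordP i) => j ->.
    rewrite base_l !mul0r !addr0 mulr1 Hv; apply/esym/imsetP; exists j => //.
  rewrite base_r if_same mulr0 eqxx /=; apply/esym/negbTE/imsetP => [[j' _ /eqP]].
  by rewrite eq_rlshift.
by rewrite card_imset ?cardsT ?card_ord //; apply: lshift_inj.
Qed.

Lemma code_ok (F : finFieldType) m (hq : #|F| = (2 ^ m)%N) v (Hv : forall i, v i != 0) :
  is_code 3 (2 ^ m) (code hq v) /\ is_MDS (code hq v).
Proof.
have md : min_dist_is (code hq v) (2 ^ m).
  split.
    exists (word hq v 1 0 0), 0; split.
    - by apply/mem_codeP; exists 1, 0, 0.
    - exact: mem0v.
    - apply/eqP => /(congr1 (fun y : 'rV_(2 ^ m + 2) => y 0 (posZ hq))).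
      rewrite word_Z mxE mulr1; apply/eqP; exact: Hv.
    - by rewrite /hdist subr0 hwt_g1.
  move=> x y /mem_codeP [a [b [c ->]]] /mem_codeP [a' [b' [c' ->]]] hxy.
  rewrite /hdist word_sub; apply: weight => // [[ha hb hc]]; move/eqP: hxy; apply.
  by move/eqP: ha; move/eqP: hb; move/eqP: hc; rewrite !subr_eq0 => /eqP -> /eqP -> /eqP ->.
split; first by split => //; exact: dim_code.
rewrite /is_MDS dim_code //.
have -> : (2 ^ m + 2 - 3 + 1 = 2 ^ m)%N by have := expn_gt0 2 m; lia.
exact: md.
Qed.

Definition vl (F : finFieldType) m (hq : #|F| = (2 ^ m)%N) (g al be : F)
  (i : 'I_(2 ^ m + 2)) : F :=
  if i == posZ hq then g else if i == posP m then al else if i == posQ m then be else 1.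

Lemma pos_inj (F : finFieldType) m (hq : #|F| = (2 ^ m)%N) : injective (pos hq).
Proof. by move=> s t /lshift_inj /cast_ord_inj /enum_rank_inj. Qed.

Lemma vl_pos (F : finFieldType) m (hq : #|F| = (2 ^ m)%N) g al be t :
  t != 0 -> vl hq g al be (pos hq t) = 1.
Proof.
move=> t0; rewrite /vl /posZ (inj_eq (@pos_inj _ _ hq)) (negbTE t0).
by rewrite /pos /posP /posQ !eq_lrshift.
Qed.

Lemma vl_Z (F : finFieldType) m (hq : #|F| = (2 ^ m)%N) g al be :
  vl hq g al be (posZ hq) = g.
Proof. by rewrite /vl eqxx. Qed.

Lemma vl_P (F : finFieldType) m (hq : #|F| = (2 ^ m)%N) g al be :
  vl hq g al be (posP m) = al.
Proof. by rewrite /vl eqxx /posZ /pos /posP eq_rlshift. Qed.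

Lemma vl_Q (F : finFieldType) m (hq : #|F| = (2 ^ m)%N) g al be :
  vl hq g al be (posQ m) = be.
Proof. by rewrite /vl eqxx /posZ /pos /posP /posQ eq_rlshift eq_rshift. Qed.

Lemma vl_nz (F : finFieldType) m (hq : #|F| = (2 ^ m)%N) (g al be : F) :
  g != 0 -> al != 0 -> be != 0 -> forall i, vl hq g al be i != 0.
Proof. by move=> *; rewrite /vl; repeat case: ifP => _ //; rewrite oner_eq0. Qed.

Lemma key (F : finFieldType) m (hq : #|F| = (2 ^ m)%N) (e g al be : F) x :
  e != 0 -> e != 1 ->
  x \in code hq (fun _ => 1) -> x \in code hq (vl hq g al be) ->
  exists a b c, [/\ x = word hq (fun _ => 1) a b c, g * a = a, al * b = b & be * c = c].
Proof.
move=> e0 e1 /mem_codeP [a [b [c ->]]] /mem_codeP [a' [b' [c' E]]].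
have h2 := char2 hq.
have ev : forall t, t != 0 -> (a - a') + (b - b') * t + (c - c') * t ^+ 2 = 0.
  move=> t t0; have := congr1 (fun y : 'rV_(2 ^ m + 2) => y 0 (pos hq t)) E.
  rewrite /= !word_pos vl_pos // !mul1r => h.
  have -> : (a - a') + (b - b') * t + (c - c') * t ^+ 2 =
    (a + b * t + c * t ^+ 2) - (a' + b' * t + c' * t ^+ 2) by ring.
  by rewrite h subrr.
have ne1 : (1 : F) != 0 by rewrite oner_eq0.
have ne2 : 1 + e != 0.
  apply: contra e1 => /eqP h; apply/eqP.
  have : e - 1 = (1 + e) - 2%:R by ring.
  by rewrite h h2 subrr => /eqP; rewrite subr_eq0 => /eqP.
have d12 : (1 : F) != e by rewrite eq_sym.
have d13 : (1 : F) != 1 + e.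
  apply: contra e0 => /eqP h; apply/eqP; have hh : 1 + e - 1 = e by ring.
  by rewrite -h subrr in hh.
have d23 : e != 1 + e.
  apply: contra ne1 => /eqP h; apply/eqP; have hh : 1 + e - e = 1 by ring.
  by rewrite -h subrr in hh.
have [da db dc] := vander3 d12 d13 d23 (ev _ ne1) (ev _ e0) (ev _ ne2).
move/eqP: da; rewrite subr_eq0 => /eqP da; move/eqP: db; rewrite subr_eq0 => /eqP db.
move/eqP: dc; rewrite subr_eq0 => /eqP dc; subst a' b' c'.
exists a, b, c; split => //.
- have := congr1 (fun y : 'rV_(2 ^ m + 2) => y 0 (posZ hq)) E.
  by rewrite /= !word_Z vl_Z mul1r => hz; rewrite -hz.
- have := congr1 (fun y : 'rV_(2 ^ m + 2) => y 0 (posP m)) E.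
  by rewrite /= !word_P vl_P mul1r => hz; rewrite -hz.
- have := congr1 (fun y : 'rV_(2 ^ m + 2) => y 0 (posQ m)) E.
  by rewrite /= !word_Q vl_Q mul1r => hz; rewrite -hz.
Qed.

Lemma back (F : finFieldType) m (hq : #|F| = (2 ^ m)%N) (g al be a b c : F) :
  (g = 1 \/ a = 0) -> (al = 1 \/ b = 0) -> (be = 1 \/ c = 0) ->
  word hq (fun _ => 1) a b c \in code hq (vl hq g al be).
Proof.
move=> hg hal hbe; apply/mem_codeP; exists a, b, c.
apply/rowP => i; rewrite !mxE /vl.
case: eqP => [->|_].
  rewrite /posZ base_pos expr0n /= !mulr0 !addr0.
  by case: hg => ->; rewrite ?mul1r ?mulr0.
case: eqP => [->|_].
  by rewrite base_P; case: hal => ->; rewrite ?mul1r ?mulr0.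
case: eqP => [->|_] //.
by rewrite base_Q; case: hbe => ->; rewrite ?mul1r ?mulr0.
Qed.

Lemma inter (F : finFieldType) m (hq : #|F| = (2 ^ m)%N) (e : F) l :
  e != 0 -> e != 1 -> (l <= 3)%N ->
  \dim (code hq (fun _ => 1%R) :&: code hq (vl hq (if (0 < l)%N then 1%R else e)
      (if (1 < l)%N then 1%R else e) (if (2 < l)%N then 1%R else e)))%VS = l.
Proof.
move=> e0 e1 hl.
have eqS : (code hq (fun _ => 1%R) :&: code hq (vl hq (if (0 < l)%N then 1%R else e)
      (if (1 < l)%N then 1%R else e) (if (2 < l)%N then 1%R else e)))%VS
    = <<take l (gens hq (fun _ => 1%R))>>%VS.
  apply/vspaceP => x; rewrite memv_cap; apply/andP/idP.
    case=> h1 h2; have [a [b [c [-> ha hb hc]]]] := key e0 e1 h1 h2.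
    have z : forall w : F, e * w = w -> w = 0.
      move=> w hw; apply/eqP.
      have : (e - 1) * w = 0 by rewrite mulrBl hw mul1r subrr.
      by move/eqP; rewrite mulf_eq0 subr_eq0 (negbTE e1).
    rewrite word_lin.
    clear h1 h2; move: ha hb hc; case: l hl => [|[|[|[|l]]]] //= _ ha hb hc.
    - by rewrite (z _ ha) (z _ hb) (z _ hc) !scale0r !addr0 span_nil memv0.
    - rewrite (z _ hb) (z _ hc) !scale0r !addr0; apply: memvZ; apply: memv_span.
      exact: mem_head.
    - rewrite (z _ hc) !scale0r !addr0; apply: memvD; apply: memvZ; apply: memv_span;
        by rewrite !inE eqxx ?orbT.
    - apply: memvD; first apply: memvD; apply: memvZ; apply: memv_span;
        by rewrite !inE eqxx ?orbT.
  move=> hx; split.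
    have s1 : (<<take l (gens hq (fun _ => 1%R))>> <= code hq (fun _ => 1%R))%VS.
      by apply/span_subvP => y /mem_take hy; apply: memv_span.
    exact: (subvP s1).
  have s2 : (<<take l (gens hq (fun _ => 1%R))>> <= code hq (vl hq (if (0 < l)%N then 1%R else e)
      (if (1 < l)%N then 1%R else e) (if (2 < l)%N then 1%R else e)))%VS.
    apply/span_subvP => y; case: l hl {hx} => [|[|[|[|l]]]] //= _; rewrite ?inE.
    - by move=> /eqP ->; apply: back; by [left|right].
    - by move=> /orP [] /eqP ->; apply: back; by [left|right].
    - by move=> /or3P [] /eqP ->; apply: back; by [left|right].
  exact: (subvP s2).
rewrite eqS.
have fr : free (take l (gens hq (fun _ => 1%R))).
  apply: (@catl_free _ _ (drop l (gens hq (fun _ => 1%R)))); rewrite cat_take_drop.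
  exact: (@free_gens _ _ hq (fun _ => 1%R) (fun _ => oner_neq0 F)).
by move/eqP: fr; rewrite size_takel.
Qed.

Lemma exists_e (F : finFieldType) m (hq : #|F| = (2 ^ m)%N) (hq4 : (4 < 2 ^ m)%N) :
  exists e : F, e != 0 /\ e != 1.
Proof.
have hc := cardsC [set (0%R : F); 1%R].
have h2 : (#|[set (0%R : F); 1%R]| <= 2)%N by rewrite cards2; case: (_ != _).
have /set0Pn [e] : ~: [set (0%R : F); 1%R] != set0.
  rewrite -card_gt0; rewrite hq in hc; lia.
by rewrite !inE negb_or => /andP [h0 h1]; exists e.
Qed.

Local Close Scope ring_scope.

Theorem theorem6 (F : finFieldType) (m : nat)
  (hq : #|F| = 2 ^ m) (hq4 : 4 < 2 ^ m) (l : nat) (hl : l <= 3) :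
  exists C1 C2 : {vspace 'rV[F]_(2 ^ m + 2)},
    [/\ is_code 3 (2 ^ m) C1, is_MDS C1,
        is_code 3 (2 ^ m) C2, is_MDS C2
      & l_intersection_pair l C1 C2].
Proof.
have [e [e0 e1]] := exists_e hq hq4.
have gnz : forall k : nat, ((if (k < l)%N then 1%R else e) != 0 :> F)%R.
  by move=> k; case: ifP => _ //; rewrite oner_eq0.
have [c1 m1] := @code_ok _ _ hq (fun _ => 1%R) (fun _ => oner_neq0 F).
have [c2 m2] := @code_ok _ _ hq _ (vl_nz hq (gnz 0) (gnz 1) (gnz 2)).
exists (code hq (fun _ => 1%R)), (code hq (vl hq (if (0 < l) then 1%R else e)
      (if (1 < l) then 1%R else e) (if (2 < l) then 1%R else e))).
split => //.
rewrite /l_intersection_pair; exact: (inter hq e0 e1 hl).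
Qed.
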